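(* There exists a sequence $f_{1,\infty}=(f_1,f_2,\dots)$ of surjective continuous maps from $I=[0,1]$ to itself such that (1) $f_{1,\infty}$ converges uniformly on $I$ to some continuous map $f\colon I\to I$; (2) there is a strictly increasing sequence $S$ of positive integers with $h_S(f_{1,\infty})\ge \log 3$; (3) the nonautonomous system $(I,f_{1,\infty})$ is not Li–Yorke chaotic.
   Context: A nonautonomous dynamical system (NDS) $(X,f_{1,\infty})$ consists of a compact metric space $(X,\varrho)$ and a sequence $f_{1,\infty}=(f_n)_{n\ge1}$ of continuous maps $X\to X$. Iterates: $f_1^0(x)=x$ and $f_1^n(x)=f_n(f_1^{n-1}(x))$, i.e. $f_1^n=f_n\circ\dots\circ f_1$. Li–Yorke pair: distinct $x,y\in X$ with $\limsup_{n\to\infty}\varrho(f_1^n(x),f_1^n(y))>0$ and $\liminf_{n\to\infty}\varrho(f_1^n(x),f_1^n(y))=0$. A set is Li–Yorke scrambled if any two distinct points of it form a Li–Yorke pair; the NDS is Li–Yorke chaotic if $X$ contains an uncountable Li–Yorke scrambled set. Topological sequence entropy: for a strictly increasing sequence $A=(a_i)_{i\ge1}$ of positive integers and $n\ge1$ put $\varrho_n^A(x,y)=\max_{1\le j\le n}\varrho(f_1^{a_j}(x),f_1^{a_j}(y))$. A set $E\subseteq X$ is $(n,\varepsilon,A)$-separated if $\varrho_n^A(x,y)>\varepsilon$ for all distinct $x,y\in E$; let $s_n^A(f_{1,\infty},\varepsilon)$ be the maximal cardinality of such a set. Then $h_A(f_{1,\infty})=\lim_{\varepsilon\to0}\limsup_{n\to\infty}\frac1n\log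 s_n^A(f_{1,\infty},\varepsilon)$. *)

(* Defs.v *)
From Stdlib Require Import Reals Lra List.
Import ListNotations.
Open Scope R_scope.

Definition inI (x : R) : Prop := 0 <= x <= 1.

Definition maps_I (g : R -> R) : Prop := forall x, inI x -> inI (g x).

Definition cont_I (g : R -> R) : Prop :=
  forall x, inI x -> forall eps, 0 < eps ->
    exists delta, 0 < delta /\
      forall y, inI y -> Rabs (y - x) < delta -> Rabs (g y - g x) < eps.

Definition surj_I (g : R -> R) : Prop :=
  forall y, inI y -> exists x, inI x /\ g x = y.

(* Nonautonomous system: F k is the map f_{k+1}.
   iterN F n = f_1^n = f_n o ... o f_1, with iterN F 0 = id. *)
Fixpoint iterN (F : nat -> R -> R) (n : nat) (x : R) : R :=
  match n with
  | O => x
  | S m => F m (iterN F m x)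
  end.

Definition unif_conv_I (F : nat -> R -> R) (g : R -> R) : Prop :=
  forall eps, 0 < eps -> exists N, forall n x, (N <= n)%nat -> inI x ->
    Rabs (F n x - g x) < eps.

(* A = (a_j)_{j>=1} strictly increasing positive integers: here a_{j+1} = A j *)
Definition strict_incr_pos (A : nat -> nat) : Prop :=
  (0 < A 0)%nat /\ forall j, (A j < A (S j))%nat.

Definition sep_pair (F : nat -> R -> R) (A : nat -> nat) (n : nat) (eps x y : R)
  : Prop :=
  exists j, (j < n)%nat /\
    Rabs (iterN F (A j) x - iterN F (A j) y) > eps.

(* E (a finite set, as a duplicate-free list of points of I) is
   (n, eps, A)-separated *)
Definition sep_set (F : nat -> R -> R) (A : nat -> nat) (n : nat) (eps : R)
  (E : list R) : Prop :=
  NoDup E /\ (forall x, In x E -> inI x) /\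
  forall x y, In x E -> In y E -> x <> y -> sep_pair F A n eps x y.

(* "s_n^A(F, eps) >= k": there is an (n,eps,A)-separated set of cardinality k *)
Definition sn_ge (F : nat -> R -> R) (A : nat -> nat) (n : nat) (eps : R)
  (k : nat) : Prop :=
  exists E, sep_set F A n eps E /\ length E = k.

(* "(1/n) log s_n^A(F,eps) > c" (s_n is a maximum, so this holds iff
   some separated set of cardinality k has (1/n) log k > c) *)
Definition rate_gt (F : nat -> R -> R) (A : nat -> nat) (n : nat) (eps c : R)
  : Prop :=
  exists k, sn_ge F A n eps k /\ ln (INR k) / INR n > c.

(* "limsup_{n->oo} (1/n) log s_n^A(F,eps) > c" *)
Definition limsup_rate_gt (F : nat -> R -> R) (A : nat -> nat) (eps c : R)
  : Prop :=
  forall N, exists n, (N <= n)%nat /\ (1 <= n)%nat /\ rate_gt F A n eps c.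

(* "h_A(F) = lim_{eps->0} limsup_n (1/n) log s_n^A(F,eps) >= c" *)
Definition seq_entropy_ge (F : nat -> R -> R) (A : nat -> nat) (c : R) : Prop :=
  forall c', c' < c -> exists eps0, 0 < eps0 /\
    forall eps, 0 < eps < eps0 -> limsup_rate_gt F A eps c'.

Definition LY_pair (F : nat -> R -> R) (x y : R) : Prop :=
  x <> y /\
  (exists d, 0 < d /\ forall N, exists n, (N <= n)%nat /\
       Rabs (iterN F n x - iterN F n y) > d) /\
  (forall e, 0 < e -> forall N, exists n, (N <= n)%nat /\
       Rabs (iterN F n x - iterN F n y) < e).

Definition LY_scrambled (F : nat -> R -> R) (S : R -> Prop) : Prop :=
  (forall x, S x -> inI x) /\
  forall x y, S x -> S y -> x <> y -> LY_pair F x y.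

Definition uncountable (S : R -> Prop) : Prop :=
  ~ exists g : R -> nat, forall x y, S x -> S y -> g x = g y -> x = y.

Definition LY_chaotic (F : nat -> R -> R) : Prop :=
  exists S, LY_scrambled F S /\ uncountable S.

(* Main.v *)
Require Import Defs.
From Stdlib Require Import Reals Lra Lia List Arith.
Import ListNotations.
Open Scope R_scope.

Lemma Rdiv_le_0_compat a b : 0 <= a -> 0 < b -> 0 <= a / b.
Proof. intros; unfold Rdiv; apply Rmult_le_pos; auto; apply Rlt_le, Rinv_0_lt_compat; auto. Qed.

Ltac rabs := unfold Rabs in *; repeat destruct Rcase_abs; try lra.

Definition relu (y : R) : R := (y + Rabs y) / 2.
Lemma relu_pos y : 0 <= y -> relu y = y.
Proof. intro H; unfold relu; rewrite Rabs_right by lra; lra. Qed.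
Lemma relu_neg y : y <= 0 -> relu y = 0.
Proof. intro H; unfold relu; rewrite Rabs_left1 by lra; lra. Qed.
Lemma relu_ge0 y : 0 <= relu y.
Proof. unfold relu; rabs. Qed.

Definition cl01 (u : R) : R := relu u - relu (u - 1).
Lemma cl01_in u : 0 <= u <= 1 -> cl01 u = u.
Proof. intro H; unfold cl01; rewrite relu_pos by lra; rewrite relu_neg by lra; lra. Qed.
Lemma cl01_lo u : u <= 0 -> cl01 u = 0.
Proof. intro H; unfold cl01; rewrite relu_neg by lra; rewrite relu_neg by lra; lra. Qed.
Lemma cl01_hi u : 1 <= u -> cl01 u = 1.
Proof. intro H; unfold cl01; rewrite relu_pos by lra; rewrite relu_pos by lra; lra. Qed.

Definition Z (u : R) : R := 3 * u - 6 * relu (u - 1/3) + 6 * relu (u - 2/3).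
Lemma Z_lo u : u <= 1/3 -> Z u = 3 * u.
Proof. intro H; unfold Z; rewrite !relu_neg by lra; lra. Qed.
Lemma Z_mid u : 1/3 <= u <= 2/3 -> Z u = 2 - 3 * u.
Proof. intro H; unfold Z; rewrite relu_pos by lra; rewrite relu_neg by lra; lra. Qed.
Lemma Z_hi u : 2/3 <= u -> Z u = 3 * u - 2.
Proof. intro H; unfold Z; rewrite !relu_pos by lra; lra. Qed.
Lemma Z_range u : 0 <= u <= 1 -> 0 <= Z u <= 1.
Proof.
  intro H. destruct (Rle_dec u (1/3)). rewrite Z_lo; lra.
  destruct (Rle_dec u (2/3)). rewrite Z_mid; lra. rewrite Z_hi; lra.
Qed.
Lemma Z_0 : Z 0 = 0. Proof. rewrite Z_lo; lra. Qed.
Lemma Z_1 : Z 1 = 1. Proof. rewrite Z_hi; lra. Qed.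

Definition zeta (a t : R) : R := t + a * (Z (cl01 (t / a - 1)) - cl01 (t / a - 1)).

Lemma zeta_lo a t : 0 < a -> t <= a -> zeta a t = t.
Proof.
  intros Ha H. unfold zeta. rewrite cl01_lo. rewrite Z_0; ring.
  assert (t / a <= 1). { apply (Rmult_le_reg_r a); auto. unfold Rdiv; rewrite Rmult_assoc, Rinv_l; lra. }
  lra.
Qed.
Lemma zeta_hi a t : 0 < a -> 2 * a <= t -> zeta a t = t.
Proof.
  intros Ha H. unfold zeta. rewrite cl01_hi. rewrite Z_1; ring.
  assert (2 <= t / a). { apply (Rmult_le_reg_r a); auto. unfold Rdiv; rewrite Rmult_assoc, Rinv_l; lra. }
  lra.
Qed.
Lemma zeta_win w s : 0 < w -> 0 <= s <= 1 -> zeta w (w * (1 + s)) = w * (1 + Z s).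
Proof.
  intros Hw Hs. unfold zeta.
  replace (w * (1 + s) / w - 1) with s by (field; lra).
  rewrite cl01_in by lra. ring.
Qed.
Lemma zeta_mid a t : 0 < a -> a <= t <= 2 * a -> a <= zeta a t <= 2 * a.
Proof.
  intros Ha H. replace t with (a * (1 + (t / a - 1))) by (field; lra).
  assert (0 <= t / a - 1 <= 1).
  { split. apply (Rmult_le_reg_r a); auto. 2: apply (Rmult_le_reg_r a); auto.
    all: unfold Rminus, Rdiv; rewrite Rmult_plus_distr_r, Rmult_assoc, Rinv_l; lra. }
  rewrite zeta_win by lra. pose proof (Z_range _ H0). nra.
Qed.
Lemma zeta_scale a l s : 0 < a -> 0 < l -> zeta a (l * s) = l * zeta (a / l) s.
Proof.
  intros Ha Hl. unfold zeta.
  replace (l * s / a - 1) with (s / (a / l) - 1) by (field; lra).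
  field; lra.
Qed.
Lemma zeta_0 a : 0 < a -> zeta a 0 = 0.
Proof. intro; apply zeta_lo; lra. Qed.
Lemma zeta_nonneg a t : 0 < a -> 0 <= t -> 0 <= zeta a t.
Proof.
  intros Ha Ht. destruct (Rle_dec t a). rewrite zeta_lo; lra.
  destruct (Rle_dec (2*a) t). rewrite zeta_hi; lra.
  pose proof (zeta_mid a t Ha ltac:(lra)); lra.
Qed.
Lemma zeta_ge a t l : 0 < a -> l <= t -> (l <= a \/ 2 * a <= l) -> l <= zeta a t.
Proof.
  intros Ha Ht Hl. destruct (Rle_dec t a). rewrite zeta_lo; lra.
  destruct (Rle_dec (2*a) t). rewrite zeta_hi; lra.
  pose proof (zeta_mid a t Ha ltac:(lra)); lra.
Qed.
Lemma zeta_surj a t' : 0 < a -> 0 <= t' -> exists t, 0 <= t /\ zeta a t = t'.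
Proof.
  intros Ha Ht. destruct (Rle_dec t' a). exists t'; split; auto; apply zeta_lo; lra.
  destruct (Rle_dec (2*a) t'). exists t'; split; auto; apply zeta_hi; lra.
  set (s := t' / a - 1).
  assert (Hs : 0 <= s <= 1).
  { unfold s; split. apply (Rmult_le_reg_r a); auto. 2: apply (Rmult_le_reg_r a); auto.
    all: unfold Rminus, Rdiv; rewrite Rmult_plus_distr_r, Rmult_assoc, Rinv_l; lra. }
  exists (a * (1 + s / 3)). split. nra.
  rewrite zeta_win by lra. rewrite Z_lo by lra. unfold s. field. lra.
Qed.
Definition lipE (f : R -> R) : Prop :=
  exists L, 0 <= L /\ forall x y, Rabs (f x - f y) <= L * Rabs (x - y).

Lemma lipE_cont f : lipE f -> cont_I f.
Proof.
  intros [L [HL H]] x Hx eps He. exists (eps / (L + 1)). split.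
  apply Rdiv_lt_0_compat; lra.
  intros y Hy Hd. specialize (H y x).
  assert (E : eps / (L + 1) * (L + 1) = eps) by (field; lra).
  assert (0 <= Rabs (y - x)) by apply Rabs_pos.
  nra.
Qed.
Lemma lipE_id : lipE (fun x => x).
Proof. exists 1; split; [lra|]; intros; lra. Qed.
Lemma lipE_const c : lipE (fun _ => c).
Proof. exists 0; split; [lra|]; intros. replace (c - c) with 0 by ring. rewrite Rabs_R0. pose proof (Rabs_pos (x-y)). lra. Qed.
Lemma lipE_plus f g : lipE f -> lipE g -> lipE (fun x => f x + g x).
Proof.
  intros [L1 [H1 F1]] [L2 [H2 F2]]. exists (L1 + L2); split; [lra|]. intros x y.
  replace (f x + g x - (f y + g y)) with ((f x - f y) + (g x - g y)) by ring.
  eapply Rle_trans. apply Rabs_triang. specialize (F1 x y); specialize (F2 x y). lra.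
Qed.
Lemma lipE_scal c f : lipE f -> lipE (fun x => c * f x).
Proof.
  intros [L [H F]]. exists (Rabs c * L); split. pose proof (Rabs_pos c); nra.
  intros x y. replace (c * f x - c * f y) with (c * (f x - f y)) by ring.
  rewrite Rabs_mult. pose proof (Rabs_pos c). specialize (F x y). nra.
Qed.
Lemma lipE_comp f g : lipE f -> lipE g -> lipE (fun x => g (f x)).
Proof.
  intros [L1 [H1 F1]] [L2 [H2 F2]]. exists (L2 * L1); split. nra.
  intros x y. eapply Rle_trans. apply F2. specialize (F1 x y). nra.
Qed.
Lemma lipE_relu : lipE relu.
Proof. exists 1; split; [lra|]. intros x y. unfold relu. rabs. Qed.
Lemma lipE_minus f g : lipE f -> lipE g -> lipE (fun x => f x - g x).
Proof.
  intros Hf Hg. apply (lipE_plus f (fun x => -1 * g x)) in Hf.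
  destruct Hf as [L [HL F]]. exists L; split; auto. intros x y. specialize (F x y).
  replace (f x - g x - (f y - g y)) with (f x + -1 * g x - (f y + -1 * g y)) by ring. auto.
  apply lipE_scal; auto.
Qed.

Lemma lipE_cl01 : lipE cl01.
Proof.
  unfold cl01. apply lipE_minus. apply lipE_relu.
  apply (lipE_comp (fun x => x - 1) relu). apply lipE_minus. apply lipE_id. apply lipE_const. apply lipE_relu.
Qed.
Lemma lipE_Z : lipE Z.
Proof.
  unfold Z. apply lipE_plus. apply lipE_minus. apply lipE_scal, lipE_id.
  apply lipE_scal. apply (lipE_comp (fun x => x - 1/3) relu). apply lipE_minus. apply lipE_id. apply lipE_const. apply lipE_relu.
  apply lipE_scal. apply (lipE_comp (fun x => x - 2/3) relu). apply lipE_minus. apply lipE_id. apply lipE_const. apply lipE_relu.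
Qed.
Lemma lipE_zeta a : lipE (zeta a).
Proof.
  unfold zeta. apply lipE_plus. apply lipE_id. apply lipE_scal.
  assert (Hc : lipE (fun t => cl01 (t / a - 1))).
  { apply (lipE_comp (fun t => t / a - 1) cl01). apply lipE_minus.
    unfold Rdiv. pose proof (lipE_scal (/a) (fun t => t) lipE_id) as H.
    destruct H as [L [HL F]]. exists L; split; auto. intros x y. specialize (F x y).
    rewrite (Rmult_comm x), (Rmult_comm y); auto.
    apply lipE_const. apply lipE_cl01. }
  apply lipE_minus. apply (lipE_comp _ Z Hc lipE_Z). auto.
Qed.

Definition g (t : R) : R := t / (1 + t).
Definition h (x : R) : R := x / (1 - x).

Lemma h_g t : 0 <= t -> h (g t) = t.
Proof. intro; unfold h, g. field. split; lra. Qed.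
Lemma g_h x : x < 1 -> g (h x) = x.
Proof. intro; unfold h, g. field. split; lra. Qed.
Lemma g_range t : 0 <= t -> 0 <= g t < 1.
Proof.
  intro; unfold g. split. apply Rdiv_le_0_compat; lra.
  apply (Rmult_lt_reg_r (1 + t)); [lra|]. unfold Rdiv; rewrite Rmult_assoc, Rinv_l; lra.
Qed.
Lemma g_diff s t : 0 <= s -> 0 <= t -> g s - g t = (s - t) / ((1 + s) * (1 + t)).
Proof. intros; unfold g; field; split; lra. Qed.
Lemma g_le s t : 0 <= s -> s <= t -> g s <= g t.
Proof.
  intros. assert (g t - g s >= 0); [|lra]. rewrite g_diff by lra.
  apply Rle_ge, Rdiv_le_0_compat. lra. nra.
Qed.
Lemma g_nonneg_h x : 0 <= x < 1 -> 0 <= h x.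
Proof. intro; unfold h; apply Rdiv_le_0_compat; lra. Qed.
Lemma one_minus_g t : 0 <= t -> 1 - g t = / (1 + t).
Proof. intros; unfold g; field; lra. Qed.

Lemma lipE_grelu : lipE (fun s => g (relu s)).
Proof.
  exists 1; split; [lra|]. intros x y. pose proof (relu_ge0 x); pose proof (relu_ge0 y).
  rewrite g_diff by auto.
  assert (Rabs (relu x - relu y) <= Rabs (x - y)) by (unfold relu; rabs).
  unfold Rdiv. rewrite Rabs_mult. rewrite (Rabs_right (/ _)).
  2: { apply Rle_ge, Rlt_le, Rinv_0_lt_compat. nra. }
  assert (/ ((1 + relu x) * (1 + relu y)) <= 1).
  { rewrite <- Rinv_1. apply Rinv_le_contravar. lra. nra. }
  pose proof (Rabs_pos (relu x - relu y)). nra.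
Qed.

Definition clab (al be x : R) : R := al + relu (x - al) - relu (x - be).
Lemma clab_range al be x : al <= be -> al <= clab al be x <= be.
Proof. intro; unfold clab, relu; rabs. Qed.
Lemma clab_in al be x : al <= x <= be -> clab al be x = x.
Proof. intros; unfold clab; rewrite relu_pos by lra; rewrite relu_neg by lra; lra. Qed.
Lemma clab_lo al be x : al <= be -> x <= al -> clab al be x = al.
Proof. intros; unfold clab; rewrite !relu_neg by lra; lra. Qed.
Lemma clab_hi al be x : al <= be -> be <= x -> clab al be x = be.
Proof. intros; unfold clab; rewrite !relu_pos by lra; lra. Qed.
Lemma lipE_clab al be : lipE (clab al be).
Proof.
  unfold clab. apply lipE_minus. apply lipE_plus. apply lipE_const.
  apply (lipE_comp (fun x => x - al) relu). apply lipE_minus; [apply lipE_id|apply lipE_const]. apply lipE_relu.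
  apply (lipE_comp (fun x => x - be) relu). apply lipE_minus; [apply lipE_id|apply lipE_const]. apply lipE_relu.
Qed.
Lemma lipE_hclab al be : 0 <= al <= be -> be < 1 -> lipE (fun x => h (clab al be x)).
Proof.
  intros H1 H2. destruct (lipE_clab al be) as [L [HL F]].
  exists (L / ((1 - be) * (1 - be))). split. apply Rdiv_le_0_compat; nra.
  intros x y. pose proof (clab_range al be x ltac:(lra)). pose proof (clab_range al be y ltac:(lra)).
  set (u := clab al be x) in *. set (v := clab al be y) in *.
  replace (h u - h v) with ((u - v) / ((1 - u) * (1 - v))) by (unfold h; field; split; lra).
  unfold Rdiv. rewrite Rabs_mult. rewrite (Rabs_right (/ _)).
  2: { apply Rle_ge, Rlt_le, Rinv_0_lt_compat. nra. }
  assert (/ ((1 - u) * (1 - v)) <= / ((1 - be) * (1 - be))).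
  { apply Rinv_le_contravar. nra. nra. }
  specialize (F x y). fold u v in F.
  pose proof (Rabs_pos (u - v)). pose proof (Rabs_pos (x - y)).
  assert (0 < / ((1 - be) * (1 - be))) by (apply Rinv_0_lt_compat; nra).
  nra.
Qed.

Lemma cl01_range u : 0 <= cl01 u <= 1.
Proof. unfold cl01, relu; rabs. Qed.

Definition mob (q x : R) : R := q * cl01 x / (1 + (q - 1) * cl01 x).

Lemma mob_den q u : 1/2 <= q -> 0 <= u <= 1 -> 1/2 <= 1 + (q - 1) * u.
Proof. intros. destruct (Rle_dec 1 q); nra. Qed.

Lemma lipE_mob q : 1/2 <= q -> lipE (mob q).
Proof.
  intro Hq. destruct lipE_cl01 as [L [HL F]].
  exists (q * 4 * L). split. nra.
  intros x y. pose proof (cl01_range x); pose proof (cl01_range y).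
  unfold mob. set (u := cl01 x) in *. set (v := cl01 y) in *.
  pose proof (mob_den q u Hq H); pose proof (mob_den q v Hq H0).
  replace (q * u / (1 + (q - 1) * u) - q * v / (1 + (q - 1) * v))
    with (q * (u - v) * / ((1 + (q - 1) * u) * (1 + (q - 1) * v))) by (field; lra).
  rewrite Rabs_mult. rewrite (Rabs_right (/ _)).
  2: { apply Rle_ge, Rlt_le, Rinv_0_lt_compat. nra. }
  rewrite Rabs_mult, (Rabs_right q) by lra.
  assert (/ ((1 + (q - 1) * u) * (1 + (q - 1) * v)) <= 4).
  { replace 4 with (/ (1/4)) by field. apply Rinv_le_contravar. lra. nra. }
  specialize (F x y). fold u v in F. pose proof (Rabs_pos (u - v)).
  assert (0 < / ((1 + (q - 1) * u) * (1 + (q - 1) * v))) by (apply Rinv_0_lt_compat; nra).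
  assert (Rabs (u - v) * / ((1 + (q - 1) * u) * (1 + (q - 1) * v)) <= Rabs (u-v) * 4) by nra.
  nra.
Qed.

Lemma mob_conj q t : 0 < q -> 0 <= t -> mob q (g t) = g (q * t).
Proof.
  intros Hq Ht. pose proof (g_range t Ht). unfold mob. rewrite cl01_in by lra.
  unfold g. field. split; nra.
Qed.
Lemma mob_1 q : 0 < q -> mob q 1 = 1.
Proof. intro; unfold mob; rewrite cl01_in by lra; field; lra. Qed.

Definition zigx (a x : R) : R :=
  x + (g (relu (zeta a (h (clab (g a) (g (2 * a)) x)))) - clab (g a) (g (2 * a)) x).

Lemma ga_le a : 0 < a -> g a <= g (2 * a).
Proof. intro; apply g_le; lra. Qed.

Lemma lipE_zigx a : 0 < a -> lipE (zigx a).
Proof.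
  intro Ha. unfold zigx. apply lipE_plus. apply lipE_id. apply lipE_minus.
  apply (lipE_comp (fun x => zeta a (h (clab (g a) (g (2 * a)) x))) (fun s => g (relu s))).
  apply (lipE_comp (fun x => h (clab (g a) (g (2 * a)) x)) (zeta a)).
  apply lipE_hclab. pose proof (g_range a); pose proof (ga_le a); lra.
  apply g_range; lra. apply lipE_zeta. apply lipE_grelu. apply lipE_clab.
Qed.

Lemma zigx_conj a t : 0 < a -> 0 <= t -> zigx a (g t) = g (zeta a t).
Proof.
  intros Ha Ht. pose proof (ga_le a Ha). unfold zigx.
  destruct (Rle_dec t a).
  - rewrite clab_lo by (auto; apply g_le; lra). rewrite h_g by lra.
    rewrite (zeta_lo a a) by lra. rewrite relu_pos by lra. rewrite (zeta_lo a t) by lra. ring.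
  - destruct (Rle_dec (2 * a) t).
    + rewrite clab_hi by (auto; apply g_le; lra). rewrite h_g by lra.
      rewrite (zeta_hi a (2*a)) by lra. rewrite relu_pos by lra. rewrite (zeta_hi a t) by lra. ring.
    + rewrite clab_in by (split; apply g_le; lra). rewrite h_g by lra.
      rewrite relu_pos by (apply zeta_nonneg; lra). ring.
Qed.
Lemma zigx_1 a : 0 < a -> zigx a 1 = 1.
Proof.
  intro Ha. pose proof (ga_le a Ha). pose proof (g_range (2*a) ltac:(lra)).
  unfold zigx. rewrite clab_hi by lra. rewrite h_g by lra.
  rewrite (zeta_hi a (2*a)) by lra. rewrite relu_pos by lra. ring.
Qed.

Section Transfer.
Variable F Phi : R -> R.
Hypothesis Hc : forall t, 0 <= t -> F (g t) = g (Phi t) /\ 0 <= Phi t.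
Hypothesis H1 : F 1 = 1.

Lemma tr_maps : maps_I F.
Proof.
  intros x [Hx0 Hx1]. destruct (Req_dec x 1). subst; rewrite H1; unfold inI; lra.
  rewrite <- (g_h x) by lra. destruct (Hc (h x)) as [E P]. apply g_nonneg_h; lra.
  rewrite E. pose proof (g_range _ P). unfold inI; lra.
Qed.
Lemma tr_surj : (forall t', 0 <= t' -> exists t, 0 <= t /\ Phi t = t') -> surj_I F.
Proof.
  intros HS y [Hy0 Hy1]. destruct (Req_dec y 1). subst. exists 1; split; auto; unfold inI; lra.
  destruct (HS (h y)) as [t [Ht E]]. apply g_nonneg_h; lra.
  exists (g t). split. pose proof (g_range t Ht); unfold inI; lra.
  destruct (Hc t Ht) as [E2 _]. rewrite E2, E. apply g_h; lra.
Qed.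
Lemma tr_close e : 0 <= e -> (forall t, 0 <= t -> Rabs (g (Phi t) - g t) <= e) ->
  forall x, inI x -> Rabs (F x - x) <= e.
Proof.
  intros He HB x [Hx0 Hx1]. destruct (Req_dec x 1). subst; rewrite H1.
  replace (1-1) with 0 by ring; rewrite Rabs_R0; auto.
  rewrite <- (g_h x) by lra. destruct (Hc (h x)) as [E P]. apply g_nonneg_h; lra.
  rewrite E. apply HB. apply g_nonneg_h; lra.
Qed.
End Transfer.

Lemma scale_close q t : 0 < q -> 0 <= t -> Rabs (g (q * t) - g t) <= Rabs (q - 1).
Proof.
  intros Hq Ht. rewrite g_diff by nra.
  replace (q * t - t) with ((q - 1) * t) by ring.
  unfold Rdiv. rewrite !Rabs_mult. rewrite (Rabs_right t) by lra.
  rewrite (Rabs_right (/ _)) by (apply Rle_ge, Rlt_le, Rinv_0_lt_compat; nra).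
  assert (t * / ((1 + q * t) * (1 + t)) <= 1).
  { apply (Rmult_le_reg_r ((1 + q * t) * (1 + t))). nra.
    rewrite Rmult_assoc, Rinv_l by nra. nra. }
  pose proof (Rabs_pos (q - 1)).
  assert (0 <= t * / ((1 + q * t) * (1 + t))).
  { apply Rmult_le_pos; auto. apply Rlt_le, Rinv_0_lt_compat; nra. }
  nra.
Qed.

Lemma zig_close a t : 0 < a -> 0 <= t -> Rabs (g (zeta a t) - g t) <= / a.
Proof.
  intros Ha Ht. assert (0 < / a) by (apply Rinv_0_lt_compat; lra).
  destruct (Rle_dec t a). rewrite zeta_lo by lra. replace (g t - g t) with 0 by ring. rewrite Rabs_R0; lra.
  destruct (Rle_dec (2*a) t). rewrite zeta_hi by lra. replace (g t - g t) with 0 by ring. rewrite Rabs_R0; lra.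
  pose proof (zeta_mid a t Ha ltac:(lra)).
  assert (g a <= g (zeta a t)) by (apply g_le; lra).
  assert (g a <= g t) by (apply g_le; lra).
  pose proof (g_range (zeta a t) ltac:(lra)). pose proof (g_range t ltac:(lra)).
  assert (1 - g a <= / a).
  { rewrite one_minus_g by lra. apply Rinv_le_contravar; lra. }
  rabs.
Qed.

Definition mm (b : nat) : nat := S b * S b.
Definition len (b : nat) : nat := 2 * mm b + 3.
Fixpoint start (b : nat) : nat :=
  match b with O => O | S b' => start b' + len b' end.
Fixpoint pos (n : nat) : nat * nat :=
  match n with
  | O => (O, O)
  | S n' => let '(b, i) := pos n' in if S i <? len b then (b, S i) else (S b, O)
  end.

Lemma pos_inv n : forall b i, pos n = (b, i) -> (i < len b)%nat /\ n = (start b + i)%nat.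
Proof.
  induction n; simpl; intros b i E.
  - inversion E; subst. unfold len; simpl; lia.
  - destruct (pos n) as [b0 i0] eqn:E0. destruct (IHn b0 i0 eq_refl) as [H1 H2].
    destruct (S i0 <? len b0) eqn:L.
    + inversion E; subst. apply Nat.ltb_lt in L. lia.
    + inversion E; subst. apply Nat.ltb_ge in L. simpl. unfold len in *; lia.
Qed.
Lemma start_mono b b' : (b <= b')%nat -> (start b <= start b')%nat.
Proof. induction 1; simpl; lia. Qed.
Lemma pos_start b i : (i < len b)%nat -> pos (start b + i) = (b, i).
Proof.
  intro Hi. destruct (pos (start b + i)) as [b' i'] eqn:E.
  destruct (pos_inv _ _ _ E) as [H1 H2].
  destruct (Nat.lt_trichotomy b b') as [Hl|[He|Hl]].
  - pose proof (start_mono (S b) b' Hl). simpl in H. lia.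
  - subst. f_equal. lia.
  - pose proof (start_mono (S b') b Hl). simpl in H. lia.
Qed.

Lemma pos_block n : forall b i, pos n = (b, i) -> (start b <= n < start (S b))%nat.
Proof. intros b i E. destruct (pos_inv _ _ _ E). simpl. lia. Qed.

Definition J (b : nat) : R := INR (S b).
Definition q (b : nat) : R := (J b + 1) / J b.
Definition lev (b : nat) : nat := Nat.log2 (S b).
Definition w (b : nat) : R := / 2 ^ lev b.
Definition a (b : nat) : R := J b * q b ^ mm b * w b.

Lemma J_ge1 b : 1 <= J b.
Proof. unfold J. rewrite S_INR. pose proof (pos_INR b). lra. Qed.
Lemma q_gt1 b : 1 < q b.
Proof. pose proof (J_ge1 b). unfold q. apply (Rmult_lt_reg_r (J b)). lra.
  unfold Rdiv; rewrite Rmult_assoc, Rinv_l; lra. Qed.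
Lemma q_le2 b : q b <= 2.
Proof. pose proof (J_ge1 b). unfold q. apply (Rmult_le_reg_r (J b)). lra.
  unfold Rdiv; rewrite Rmult_assoc, Rinv_l; lra. Qed.
Lemma qJ b : q b * J b = J b + 1.
Proof. pose proof (J_ge1 b). unfold q. field. lra. Qed.
Lemma w_pos b : 0 < w b.
Proof. unfold w. apply Rinv_0_lt_compat, pow_lt; lra. Qed.
Lemma Jw_ge1 b : 1 <= J b * w b.
Proof.
  unfold J, w, lev. destruct (Nat.log2_spec (S b)) as [H _]. lia.
  apply le_INR in H. rewrite pow_INR in H. simpl INR in H at 1.
  replace (1 + 1) with 2 in H by ring.
  assert (0 < 2 ^ Nat.log2 (S b)) by (apply pow_lt; lra).
  apply (Rmult_le_reg_r (2 ^ Nat.log2 (S b))). auto.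
  rewrite Rmult_assoc, Rinv_l; lra.
Qed.
Lemma bernoulli x n : 0 <= x -> 1 + INR n * x <= (1 + x) ^ n.
Proof.
  intro Hx. induction n. simpl; lra.
  rewrite S_INR. simpl. pose proof (pos_INR n). nra.
Qed.
Lemma a_ge b : J b + 1 <= a b.
Proof.
  pose proof (J_ge1 b). unfold a.
  assert (E : q b = 1 + / J b) by (unfold q; field; lra).
  assert (Hm : J b + 1 <= q b ^ mm b).
  { rewrite E. eapply Rle_trans; [|apply bernoulli].
    unfold mm. rewrite mult_INR. fold (J b). right. field. lra.
    apply Rlt_le, Rinv_0_lt_compat; lra. }
  pose proof (Jw_ge1 b).
  assert (0 <= q b ^ mm b) by (apply pow_le; pose proof (q_gt1 b); lra).
  replace (J b * q b ^ mm b * w b) with (q b ^ mm b * (J b * w b)) by ring. nra.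
Qed.
Lemma a_pos b : 0 < a b.
Proof. pose proof (a_ge b); pose proof (J_ge1 b); lra. Qed.

Definition Phi (b i : nat) (t : R) : R :=
  if (i <? mm b)%nat then q b * t
  else if (i <? mm b + 4)%nat then zeta (a b) t
  else / q b * t.
Definition Fx (b i : nat) (x : R) : R :=
  if (i <? mm b)%nat then mob (q b) x
  else if (i <? mm b + 4)%nat then zigx (a b) x
  else mob (/ q b) x.

Definition FF (n : nat) : R -> R := let '(b, i) := pos n in Fx b i.
Definition PP (n : nat) : R -> R := let '(b, i) := pos n in Phi b i.

Lemma invq_pos b : 0 < / q b.
Proof. apply Rinv_0_lt_compat; pose proof (q_gt1 b); lra. Qed.
Lemma invq_ge b : 1/2 <= / q b.
Proof. pose proof (q_le2 b). pose proof (q_gt1 b).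
  replace (1/2) with (/2) by field. apply Rinv_le_contravar; lra. Qed.

Lemma Fx_conj b i t : 0 <= t -> Fx b i (g t) = g (Phi b i t) /\ 0 <= Phi b i t.
Proof.
  intro Ht. pose proof (q_gt1 b). pose proof (invq_pos b). pose proof (a_pos b).
  unfold Fx, Phi. destruct (i <? mm b)%nat.
  - split. apply mob_conj; lra. nra.
  - destruct (i <? mm b + 4)%nat.
    + split. apply zigx_conj; lra. apply zeta_nonneg; lra.
    + split. apply mob_conj; lra. nra.
Qed.
Lemma Fx_1 b i : Fx b i 1 = 1.
Proof.
  pose proof (q_gt1 b). pose proof (invq_pos b). pose proof (a_pos b).
  unfold Fx. destruct (i <? mm b)%nat. apply mob_1; lra.
  destruct (i <? mm b + 4)%nat. apply zigx_1; lra. apply mob_1; lra.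
Qed.
Lemma Fx_lip b i : lipE (Fx b i).
Proof.
  pose proof (q_gt1 b). pose proof (invq_ge b). pose proof (a_pos b).
  unfold Fx. destruct (i <? mm b)%nat. apply lipE_mob; lra.
  destruct (i <? mm b + 4)%nat. apply lipE_zigx; lra. apply lipE_mob; lra.
Qed.
Lemma Phi_surj b i t' : 0 <= t' -> exists t, 0 <= t /\ Phi b i t = t'.
Proof.
  intro Ht. pose proof (q_gt1 b). pose proof (invq_pos b). pose proof (a_pos b).
  unfold Phi. destruct (i <? mm b)%nat.
  - exists (/ q b * t'). split. nra. field. lra.
  - destruct (i <? mm b + 4)%nat. apply zeta_surj; lra.
    exists (q b * t'). split. nra. field. lra.
Qed.

Lemma Fx_close b i x : inI x -> Rabs (Fx b i x - x) <= / J b.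
Proof.
  intro Hx. pose proof (J_ge1 b). assert (0 < / J b) by (apply Rinv_0_lt_compat; lra).
  apply (tr_close (Fx b i) (Phi b i) (Fx_conj b i) (Fx_1 b i)); auto. lra.
  intros t Ht. pose proof (q_gt1 b). pose proof (invq_pos b). pose proof (a_pos b).
  unfold Phi. destruct (i <? mm b)%nat.
  - eapply Rle_trans. apply scale_close; lra. right. unfold q. rewrite Rabs_right.
    field; lra. apply Rle_ge. unfold Rdiv. apply (Rmult_le_reg_r (J b)). lra.
    rewrite Rmult_minus_distr_r, Rmult_assoc, Rinv_l; lra.
  - destruct (i <? mm b + 4)%nat.
    + eapply Rle_trans. apply zig_close; lra. apply Rinv_le_contravar. lra.
      pose proof (a_ge b); lra.
    + eapply Rle_trans. apply scale_close; lra.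
      unfold q. rewrite Rinv_div. rewrite Rabs_left1.
      replace (- (J b / (J b + 1) - 1)) with (/ (J b + 1)) by (field; lra).
      apply Rinv_le_contravar; lra.
      apply (Rmult_le_reg_r (J b + 1)). lra. unfold Rdiv.
      rewrite Rmult_minus_distr_r, Rmult_assoc, Rinv_l; lra.
Qed.

Lemma FF_props k : maps_I (FF k) /\ cont_I (FF k) /\ surj_I (FF k).
Proof.
  unfold FF. destruct (pos k) as [b i]. split; [|split].
  - apply (tr_maps _ (Phi b i) (Fx_conj b i) (Fx_1 b i)).
  - apply lipE_cont, Fx_lip.
  - apply (tr_surj _ (Phi b i) (Fx_conj b i) (Fx_1 b i)). apply Phi_surj.
Qed.

Lemma block_ge n b0 b i : (start b0 <= n)%nat -> pos n = (b, i) -> (b0 <= b)%nat.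
Proof.
  intros H E. destruct (pos_block _ _ _ E). destruct (Nat.le_gt_cases b0 b); auto.
  pose proof (start_mono (S b) b0 H2). lia.
Qed.

Lemma unif : unif_conv_I FF (fun x => x).
Proof.
  intros eps He. destruct (INR_unbounded (/ eps)) as [b0 Hb0].
  exists (start b0). intros n x Hn Hx. unfold FF. destruct (pos n) as [b i] eqn:E.
  pose proof (block_ge _ _ _ _ Hn E).
  eapply Rle_lt_trans. apply Fx_close; auto.
  assert (INR b0 <= INR b) by (apply le_INR; auto).
  unfold J. rewrite S_INR.
  assert (0 < / eps) by (apply Rinv_0_lt_compat; lra).
  replace eps with (/ / eps) by (field; lra).
  apply Rinv_lt_contravar. nra. lra.
Qed.

Lemma iter_step b i x : (i < len b)%nat ->
  iterN FF (start b + S i) x = Fx b i (iterN FF (start b + i) x).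
Proof. intro H. rewrite <- plus_n_Sm. simpl. unfold FF. rewrite pos_start; auto. Qed.
Lemma iterP_step b i t : (i < len b)%nat ->
  iterN PP (start b + S i) t = Phi b i (iterN PP (start b + i) t).
Proof. intro H. rewrite <- plus_n_Sm. simpl. unfold PP. rewrite pos_start; auto. Qed.

Lemma iter_conj n t : 0 <= t -> iterN FF n (g t) = g (iterN PP n t) /\ 0 <= iterN PP n t.
Proof.
  intro Ht. induction n. simpl; auto.
  simpl. destruct IHn as [E P]. rewrite E. unfold FF, PP. destruct (pos n) as [b i].
  apply Fx_conj; auto.
Qed.
Lemma iter_one n : iterN FF n 1 = 1.
Proof. induction n; simpl; auto. rewrite IHn. unfold FF; destruct (pos n); apply Fx_1. Qed.

Fixpoint zetaN (r : nat) (w0 y : R) : R :=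
  match r with O => y | S r' => zeta w0 (zetaN r' w0 y) end.
Fixpoint Cc (b : nat) (c : R) : R :=
  match b with O => c | S b' => zetaN 4 (w b') (Cc b' c) end.

Lemma zetaN_nonneg r w0 y : 0 < w0 -> 0 <= y -> 0 <= zetaN r w0 y.
Proof. intros; induction r; simpl; auto. apply zeta_nonneg; auto. Qed.
Lemma Cc_nonneg b c : 0 <= c -> 0 <= Cc b c.
Proof. intros; induction b; auto. apply (zetaN_nonneg 4); auto. apply w_pos. Qed.

Lemma mm_pos b : (1 <= mm b)%nat.
Proof. unfold mm; lia. Qed.

Section Block.
Variable b : nat.
Variable c : R.
Hypothesis Hc : 0 <= c.
Hypothesis Hstart : iterN PP (start b) c = J b * Cc b c.


Lemma blk1 i : (i <= mm b)%nat -> iterN PP (start b + i) c = q b ^ i * (J b * (Cc b c)).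
Proof.
  induction i; intro Hi. rewrite Nat.add_0_r, Hstart. simpl; ring.
  rewrite iterP_step by (unfold len; lia). rewrite IHi by lia.
  unfold Phi. assert (i <? mm b = true)%nat by (apply Nat.ltb_lt; lia). rewrite H. simpl; ring.
Qed.

Lemma zeta_a_scaled u : zeta (a b) (q b ^ mm b * J b * u) = q b ^ mm b * J b * zeta (w b) u.
Proof.
  pose proof (J_ge1 b). pose proof (q_gt1 b).
  assert (0 < q b ^ mm b) by (apply pow_lt; lra).
  rewrite zeta_scale. f_equal. f_equal. unfold a. field. lra. apply a_pos. nra.
Qed.

Lemma blk2 r : (r <= 4)%nat -> iterN PP (start b + (mm b + r)) c = q b ^ mm b * J b * zetaN r (w b) (Cc b c).
Proof.
  pose proof (mm_pos b). induction r; intro Hr. rewrite Nat.add_0_r, blk1 by lia. simpl; ring.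
  rewrite <- plus_n_Sm. rewrite iterP_step by (unfold len; lia). rewrite IHr by lia.
  unfold Phi. assert (L1 : (mm b + r <? mm b = false)%nat) by (apply Nat.ltb_ge; lia). rewrite L1.
  assert (L2 : (mm b + r <? mm b + 4 = true)%nat) by (apply Nat.ltb_lt; lia). rewrite L2.
  simpl. apply zeta_a_scaled.
Qed.

Lemma blk3 s : (s <= mm b - 1)%nat ->
  iterN PP (start b + (mm b + 4 + s)) c = (/ q b) ^ s * (q b ^ mm b * J b * zetaN 4 (w b) (Cc b c)).
Proof.
  pose proof (mm_pos b). induction s; intro Hs. rewrite Nat.add_0_r. rewrite blk2 by lia. simpl; ring.
  rewrite <- plus_n_Sm. rewrite iterP_step by (unfold len; lia). rewrite IHs by lia.
  unfold Phi. assert (L1 : (mm b + 4 + s <? mm b = false)%nat) by (apply Nat.ltb_ge; lia). rewrite L1.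
  assert (L2 : (mm b + 4 + s <? mm b + 4 = false)%nat) by (apply Nat.ltb_ge; lia). rewrite L2.
  simpl; ring.
Qed.

Lemma blk_end : iterN PP (start (S b)) c = J (S b) * Cc (S b) c.
Proof.
  pose proof (mm_pos b).
  replace (start (S b)) with (start b + (mm b + 4 + (mm b - 1)))%nat by (cbn [start]; unfold len; lia).
  rewrite blk3 by lia. change (Cc (S b) c) with (zetaN 4 (w b) (Cc b c)).
  assert (Eq : q b ^ mm b = q b * q b ^ (mm b - 1)).
  { replace (mm b) with (S (mm b - 1)) at 1 by lia. reflexivity. }
  rewrite Eq. rewrite pow_inv.
  pose proof (q_gt1 b). assert (0 < q b ^ (mm b - 1)) by (apply pow_lt; lra).
  replace (J (S b)) with (q b * J b).
  field; repeat split; lra.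
  rewrite qJ. unfold J. rewrite (S_INR (S b)). reflexivity.
Qed.
End Block.

Lemma T_start b c : 0 <= c -> iterN PP (start b) c = J b * Cc b c.
Proof.
  intro Hc. induction b. simpl. unfold J; simpl; ring.
  apply blk_end; auto.
Qed.

Lemma inv_pow_le k p : (k <= p)%nat -> / 2 ^ p <= / 2 ^ k.
Proof. intro. apply Rinv_le_contravar. apply pow_lt; lra. apply Rle_pow; auto; lra. Qed.
Lemma inv_pow_lt k p : (p < k)%nat -> 2 * / 2 ^ k <= / 2 ^ p.
Proof.
  intro. assert (2 ^ k = 2 * 2 ^ (k - 1)).
  { replace k with (S (k - 1)) at 1 by lia. reflexivity. }
  rewrite H0. rewrite Rinv_mult. rewrite <- Rmult_assoc, Rinv_r, Rmult_1_l by lra.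
  apply inv_pow_le. lia.
Qed.

Lemma zeta_w_ge b y p : / 2 ^ p <= y -> / 2 ^ p <= zeta (w b) y.
Proof.
  intro H. apply zeta_ge; auto. apply w_pos. unfold w.
  destruct (Nat.le_gt_cases (lev b) p). left; apply inv_pow_le; auto.
  right. apply inv_pow_lt; auto.
Qed.
Lemma zetaN_ge b r y p : / 2 ^ p <= y -> / 2 ^ p <= zetaN r (w b) y.
Proof. intro; induction r; simpl; auto. apply zeta_w_ge; auto. Qed.
Lemma Cc_ge b c p : / 2 ^ p <= c -> / 2 ^ p <= Cc b c.
Proof. intro; induction b; simpl; auto. apply (zetaN_ge b 4); auto. Qed.

Lemma T_lower n c p : / 2 ^ p <= c ->
  forall b i, pos n = (b, i) -> J b * / 2 ^ p <= iterN PP n c.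
Proof.
  intros Hc b i E. destruct (pos_inv _ _ _ E) as [Hi Hn]. subst n.
  assert (Hc0 : 0 <= c) by (pose proof (pow_lt 2 p ltac:(lra)); pose proof (Rinv_0_lt_compat _ H); lra).
  pose proof (T_start b c Hc0) as Hs.
  pose proof (Cc_ge b c p Hc). pose proof (J_ge1 b). pose proof (q_gt1 b).
  assert (0 < / 2 ^ p) by (apply Rinv_0_lt_compat, pow_lt; lra).
  pose proof (mm_pos b).
  assert (Hqm : 1 <= q b ^ mm b) by (apply pow_R1_Rle; lra).
  destruct (Nat.le_gt_cases i (mm b)) as [Hle|Hgt].
  - rewrite (blk1 b c Hs i Hle). assert (1 <= q b ^ i) by (apply pow_R1_Rle; lra).
    assert (J b * / 2 ^ p <= J b * Cc b c) by (apply Rmult_le_compat_l; lra).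
    apply Rle_trans with (J b * Cc b c); [lra|]. rewrite <- (Rmult_1_l (J b * Cc b c)) at 1.
    apply Rmult_le_compat_r; [nra|lra].
  - destruct (Nat.le_gt_cases i (mm b + 4)).
    + replace i with (mm b + (i - mm b))%nat by lia.
      rewrite (blk2 b c Hs (i - mm b)) by lia.
      pose proof (zetaN_ge b (i - mm b) (Cc b c) p H).
      assert (J b * / 2 ^ p <= J b * zetaN (i - mm b) (w b) (Cc b c)) by (apply Rmult_le_compat_l; lra).
      assert (0 <= J b * zetaN (i - mm b) (w b) (Cc b c)) by nra. nra.
    + replace i with (mm b + 4 + (i - mm b - 4))%nat by lia.
      rewrite (blk3 b c Hs (i - mm b - 4)) by (unfold len in Hi; lia).
      set (s := (i - mm b - 4)%nat).
      assert (Eq : q b ^ mm b = q b ^ s * q b ^ (mm b - s)).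
      { rewrite <- pow_add. f_equal. unfold s. unfold len in Hi. lia. }
      rewrite Eq. rewrite pow_inv.
      assert (1 <= q b ^ (mm b - s)) by (apply pow_R1_Rle; lra).
      assert (0 < q b ^ s) by (apply pow_lt; lra).
      replace (/ q b ^ s * (q b ^ s * q b ^ (mm b - s) * J b * zetaN 4 (w b) (Cc b c)))
        with (q b ^ (mm b - s) * J b * zetaN 4 (w b) (Cc b c)) by (field; lra).
      pose proof (zetaN_ge b 4 (Cc b c) p H).
      assert (J b * / 2 ^ p <= J b * zetaN 4 (w b) (Cc b c)) by (apply Rmult_le_compat_l; lra).
      assert (0 <= J b * zetaN 4 (w b) (Cc b c)) by nra. nra.
Qed.

Lemma INR_le_pow2 n : INR n <= 2 ^ n.
Proof. induction n. simpl; lra. rewrite S_INR. simpl. pose proof (pow_R1_Rle 2 n ltac:(lra)). lra. Qed.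

Lemma iter_in n x : inI x -> inI (iterN FF n x).
Proof. intro; induction n; simpl; auto. apply (proj1 (FF_props n)); auto. Qed.

Lemma Phi_0 b i : Phi b i 0 = 0.
Proof. unfold Phi. destruct (i <? mm b)%nat. ring. destruct (i <? mm b + 4)%nat.
  apply zeta_0, a_pos. ring. Qed.
Lemma iter_zero n : iterN FF n 0 = 0.
Proof.
  assert (E : 0 = g 0) by (unfold g; field; lra).
  rewrite E at 1. rewrite (proj1 (iter_conj n 0 ltac:(lra))).
  assert (iterN PP n 0 = 0). { induction n; simpl; auto. rewrite IHn. unfold PP. destruct (pos n). apply Phi_0. }
  rewrite H. unfold g. field; lra.
Qed.

Lemma conv1 x : 0 < x <= 1 -> forall e, 0 < e -> exists N, forall n, (N <= n)%nat -> 1 - e < iterN FF n x.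
Proof.
  intros Hx e He. destruct (Req_dec x 1).
  { subst. exists O. intros. rewrite iter_one. lra. }
  set (c := h x). assert (Hc : 0 < c). { unfold c, h. apply Rdiv_lt_0_compat; lra. }
  destruct (INR_unbounded (/ c)) as [p Hp].
  assert (Hl : / 2 ^ p <= c).
  { pose proof (INR_le_pow2 p). assert (0 < / c) by (apply Rinv_0_lt_compat; lra).
    replace c with (/ / c) by (field; lra). apply Rinv_le_contravar; lra. }
  assert (Hl0 : 0 < / 2 ^ p) by (apply Rinv_0_lt_compat, pow_lt; lra).
  destruct (INR_unbounded (/ (e * / 2 ^ p))) as [b0 Hb0].
  exists (start b0). intros n Hn.
  destruct (pos n) as [b i] eqn:E. pose proof (block_ge _ _ _ _ Hn E).
  pose proof (T_lower n c p Hl b i E).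
  rewrite <- (g_h x) by lra. fold c.
  rewrite (proj1 (iter_conj n c ltac:(lra))).
  set (T := iterN PP n c) in *.
  assert (INR b0 <= INR b) by (apply le_INR; auto).
  assert (J b = INR b + 1) by (unfold J; apply S_INR).
  assert (HT : / e < T).
  { assert (0 < e * / 2 ^ p) by nra.
    assert (/ (e * / 2 ^ p) * (e * / 2^p) = 1) by (apply Rinv_l; lra).
    assert (HH5 : INR b * / 2 ^ p > / (e * / 2 ^ p) * / 2 ^ p) by (apply Rmult_lt_compat_r; lra).
    replace (/ (e * / 2 ^ p) * / 2 ^ p) with (/ e) in HH5 by (field; repeat split; try lra; apply pow_nonzero; lra). nra. }
  assert (0 < / e) by (apply Rinv_0_lt_compat; lra).
  assert (1 - g T = / (1 + T)) by (apply one_minus_g; lra).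
  assert (/ (1 + T) < e).
  { replace e with (/ / e) by (field; lra). apply Rinv_lt_contravar; nra. }
  lra.
Qed.

Lemma noLY x y : inI x -> inI y -> x <> y -> ~ LY_pair FF x y.
Proof.
  intros Hx Hy Hxy [_ [[d [Hd Hls]] Hli]].
  destruct (Req_dec x 0) as [Ex|Ex]; destruct (Req_dec y 0) as [Ey|Ey].
  - subst; auto.
  - subst x. destruct (conv1 y ltac:(unfold inI in Hy; lra) (1/2) ltac:(lra)) as [N HN].
    destruct (Hli (1/2) ltac:(lra) N) as [n [Hn Hd2]]. specialize (HN n Hn).
    rewrite iter_zero in Hd2. pose proof (iter_in n y Hy). unfold inI in H. rabs.
  - subst y. destruct (conv1 x ltac:(unfold inI in Hx; lra) (1/2) ltac:(lra)) as [N HN].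
    destruct (Hli (1/2) ltac:(lra) N) as [n [Hn Hd2]]. specialize (HN n Hn).
    rewrite iter_zero in Hd2. pose proof (iter_in n x Hx). unfold inI in H. rabs.
  - destruct (conv1 x ltac:(unfold inI in Hx; lra) (d/2) ltac:(lra)) as [N1 H1].
    destruct (conv1 y ltac:(unfold inI in Hy; lra) (d/2) ltac:(lra)) as [N2 H2].
    destruct (Hls (N1 + N2)%nat) as [n [Hn Hd2]].
    specialize (H1 n ltac:(lia)); specialize (H2 n ltac:(lia)).
    pose proof (iter_in n x Hx); pose proof (iter_in n y Hy). unfold inI in *. rabs.
Qed.

Lemma not_chaotic : ~ LY_chaotic FF.
Proof.
  intros [S [[HS1 HS2] Hu]]. apply Hu. exists (fun _ => O). intros x y Sx Sy _.
  destruct (Req_dec x y); auto. exfalso. apply (noLY x y (HS1 x Sx) (HS1 y Sy) H). apply HS2; auto.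
Qed.

Definition bitR (bb : bool) : R := if bb then 1 else 0.
Fixpoint val (l : list bool) : R :=
  match l with [] => 0 | bb :: l' => (2 * bitR bb + val l') / 3 end.

Lemma val_range l : 0 <= val l <= 1.
Proof. induction l; simpl. lra. destruct a0; simpl; lra. Qed.

Lemma Z_val l : Z (val l) = val (tl l).
Proof.
  destruct l as [|bb l]; simpl. apply Z_0. pose proof (val_range l).
  destruct bb; simpl. rewrite Z_hi by lra. field. rewrite Z_lo by lra. field.
Qed.

Lemma skipn_S_tl {A : Type} r (l : list A) : skipn (S r) l = tl (skipn r l).
Proof. revert l; induction r; intros [|x l]; simpl; auto. apply IHr. Qed.

Lemma zetaN_win W r l : 0 < W -> zetaN r W (W * (1 + val l)) = W * (1 + val (skipn r l)).
Proof.
  intro HW. induction r. simpl; auto.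
  simpl zetaN. rewrite IHr. rewrite zeta_win; auto. rewrite Z_val, skipn_S_tl; auto.
  apply val_range.
Qed.

Lemma zetaN_fix w0 r y : 0 < w0 -> y <= w0 -> zetaN r w0 y = y.
Proof. intros; induction r; simpl; auto. rewrite IHr. apply zeta_lo; auto. Qed.

Section Level.
Variable kk : nat.
Hypothesis Hkk : (1 <= kk)%nat.
Let W := / 2 ^ kk.
Variable l : list bool.
Let c := W * (1 + val l).

Lemma W_pos : 0 < W.
Proof. unfold W. apply Rinv_0_lt_compat, pow_lt; lra. Qed.

Lemma Cc_early b : (b <= 2 ^ kk - 1)%nat -> Cc b c = c.
Proof.
  induction b; intro Hb. reflexivity.
  change (Cc (S b) c) with (zetaN 4 (w b) (Cc b c)). rewrite IHb by lia. apply zetaN_fix. apply w_pos.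
  assert (lev b < kk)%nat.
  { unfold lev. apply Nat.log2_lt_pow2. lia. pose proof (Nat.pow_le_mono_r 2 1 kk). lia. }
  pose proof (inv_pow_lt kk (lev b) H). fold W in H0. unfold w.
  pose proof (val_range l). unfold c. pose proof W_pos. nra.
Qed.

Lemma two_pow_ge2 : (2 <= 2 ^ kk)%nat.
Proof. replace 2%nat with (2 ^ 1)%nat at 1 by reflexivity. apply Nat.pow_le_mono_r; lia. Qed.

Lemma Cc_level r : (r <= 2 ^ kk)%nat -> Cc (2 ^ kk - 1 + r) c = W * (1 + val (skipn (4 * r) l)).
Proof.
  pose proof two_pow_ge2. induction r; intro Hr.
  - rewrite Nat.add_0_r. rewrite Cc_early by lia. reflexivity.
  - replace (2 ^ kk - 1 + S r)%nat with (S (2 ^ kk - 1 + r)) by lia.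
    change (Cc (S (2 ^ kk - 1 + r)) c) with (zetaN 4 (w (2 ^ kk - 1 + r)) (Cc (2 ^ kk - 1 + r) c)).
    rewrite IHr by lia.
    assert (lev (2 ^ kk - 1 + r) = kk).
    { unfold lev. apply Nat.log2_unique. lia. rewrite Nat.pow_succ_r by lia. lia. }
    unfold w. rewrite H0. fold W. rewrite zetaN_win by apply W_pos.
    rewrite skipn_skipn. f_equal. f_equal. f_equal. f_equal. lia.
Qed.

Lemma observe r : (r < 2 ^ kk)%nat ->
  iterN FF (start (S (2 ^ kk - 2 + r))) (g c) =
  g (INR (2 ^ kk + r) * W * (1 + val (skipn (4 * r) l))).
Proof.
  intro Hr. pose proof two_pow_ge2. pose proof W_pos. pose proof (val_range l).
  assert (Hc : 0 <= c) by (unfold c; nra).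
  rewrite (proj1 (iter_conj _ c Hc)). f_equal.
  rewrite T_start by auto.
  replace (S (2 ^ kk - 2 + r)) with (2 ^ kk - 1 + r)%nat by lia.
  rewrite Cc_level by lia. unfold J. replace (S (2 ^ kk - 1 + r)) with (2 ^ kk + r)%nat by lia. ring.
Qed.

Lemma Kfac r : (r < 2 ^ kk)%nat -> 1 <= INR (2 ^ kk + r) * W <= 2.
Proof.
  intro Hr. pose proof W_pos. unfold W in *.
  assert (E : INR (2 ^ kk) = 2 ^ kk) by (rewrite pow_INR; simpl; f_equal; ring).
  assert (0 < 2 ^ kk) by (apply pow_lt; lra).
  split.
  - rewrite plus_INR, E. pose proof (pos_INR r).
    apply (Rmult_le_reg_r (2 ^ kk)); auto. rewrite Rmult_assoc, Rinv_l by lra. nra.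
  - assert (INR (2 ^ kk + r) <= 2 * 2 ^ kk).
    { replace (2 * 2 ^ kk) with (INR (2 ^ S kk)) by (rewrite pow_INR; simpl; f_equal; ring).
      apply le_INR. rewrite Nat.pow_succ_r; lia. }
    apply (Rmult_le_reg_r (2 ^ kk)); auto. rewrite Rmult_assoc, Rinv_l by lra. nra.
Qed.
End Level.

Lemma prefix_sep n : forall l l', length l = length l' -> firstn n l <> firstn n l' ->
  / 3 ^ n <= Rabs (val l - val l').
Proof.
  induction n; intros l l' Hlen Hne. simpl in Hne; congruence.
  destruct l as [|x l1]; destruct l' as [|x' l1']; simpl in Hlen; try discriminate.
  simpl in Hne; congruence.
  injection Hlen as Hlen.
  assert (H3 : 3 <= 3 ^ S n).
  { simpl. pose proof (pow_R1_Rle 3 n ltac:(lra)). lra. }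
  assert (Hp : 0 < 3 ^ n) by (apply pow_lt; lra).
  pose proof (val_range l1); pose proof (val_range l1').
  destruct (Bool.bool_dec x x') as [E|E].
  - subst x'. simpl in Hne. assert (firstn n l1 <> firstn n l1') by congruence.
    specialize (IHn l1 l1' Hlen H1). simpl val.
    replace ((2 * bitR x + val l1) / 3 - (2 * bitR x + val l1') / 3) with ((val l1 - val l1') / 3) by field.
    unfold Rdiv. rewrite Rabs_mult. rewrite (Rabs_right (/3)) by lra.
    simpl. rewrite Rinv_mult. nra.
  - simpl val. assert (/ 3 ^ S n <= / 3). { apply Rinv_le_contravar; lra. }
    destruct x; destruct x'; try congruence; simpl bitR; rabs.
Qed.

Lemma words_sep L : forall l l', length l = L -> length l' = L -> l <> l' ->
  exists r, (4 * r < L)%nat /\ / 81 <= Rabs (val (skipn (4 * r) l) - val (skipn (4 * r) l')).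
Proof.
  induction L as [L IH] using lt_wf_ind. intros l l' H1 H2 Hne.
  destruct (list_eq_dec Bool.bool_dec (firstn 4 l) (firstn 4 l')) as [E|E].
  - assert (HL : (4 < L)%nat).
    { destruct (Nat.le_gt_cases L 4); auto. exfalso. apply Hne.
      rewrite <- (@firstn_all2 bool 4 l), <- (@firstn_all2 bool 4 l') by lia. auto. }
    assert (skipn 4 l <> skipn 4 l').
    { intro E2. apply Hne. rewrite <- (firstn_skipn 4 l), <- (firstn_skipn 4 l'). congruence. }
    destruct (IH (L - 4)%nat ltac:(lia) (skipn 4 l) (skipn 4 l')) as [r [Hr Hb]]; auto.
    rewrite length_skipn; lia. rewrite length_skipn; lia.
    exists (S r). split. lia. rewrite !skipn_skipn in Hb.
    replace (4 * S r)%nat with (4 * r + 4)%nat by lia. auto.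
  - exists O. split. destruct L. destruct l; destruct l'; simpl in *; try discriminate; congruence. lia.
    simpl skipn. replace (/ 81) with (/ 3 ^ 4) by (simpl; field).
    apply prefix_sep; congruence.
Qed.

Fixpoint allbits (n : nat) : list (list bool) :=
  match n with
  | O => [[]]
  | S n' => map (cons false) (allbits n') ++ map (cons true) (allbits n')
  end.

Lemma allbits_len n l : In l (allbits n) -> length l = n.
Proof.
  revert l; induction n; simpl; intros l H. destruct H as [<-|[]]; auto.
  apply in_app_or in H. destruct H as [H|H]; apply in_map_iff in H; destruct H as [l' [<- H]]; simpl; f_equal; auto.
Qed.
Lemma allbits_length n : length (allbits n) = (2 ^ n)%nat.
Proof. induction n; simpl; auto. rewrite length_app, !length_map, IHn. lia. Qed.

Lemma NoDup_map_on {A B : Type} (f : A -> B) l : NoDup l ->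
  (forall a b, In a l -> In b l -> f a = f b -> a = b) -> NoDup (map f l).
Proof.
  induction 1 as [|x l Hx Hl IH]; intros Hinj; simpl; constructor.
  - intro Hin. apply in_map_iff in Hin. destruct Hin as [y [E Hy]].
    assert (y = x) by (apply Hinj; simpl; auto). subst; auto.
  - apply IH. intros; apply Hinj; simpl; auto.
Qed.

Lemma allbits_nodup n : NoDup (allbits n).
Proof.
  induction n; simpl. constructor. simpl; auto. constructor.
  apply NoDup_app.
  - apply NoDup_map_on; auto. intros; congruence.
  - apply NoDup_map_on; auto. intros; congruence.
  - intros a0 H1 H2. apply in_map_iff in H1, H2. destruct H1 as [x [<- _]]. destruct H2 as [y [E _]]. discriminate.
Qed.

Lemma g_sep K s s' : 1 <= K <= 2 -> 0 <= s <= 1 -> 0 <= s' <= 1 -> / 81 <= Rabs (s - s') ->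
  / 2025 <= Rabs (g (K * (1 + s)) - g (K * (1 + s'))).
Proof.
  intros HK Hs Hs' Hd. rewrite g_diff by nra.
  replace (K * (1 + s) - K * (1 + s')) with (K * (s - s')) by ring.
  unfold Rdiv. rewrite !Rabs_mult. rewrite (Rabs_right K) by lra.
  set (D := (1 + K * (1 + s)) * (1 + K * (1 + s'))).
  assert (F1 : 2 <= 1 + K * (1 + s) <= 5) by nra.
  assert (F2 : 2 <= 1 + K * (1 + s') <= 5) by nra.
  assert (HD : 0 < D <= 25) by (unfold D; split; nra).
  rewrite (Rabs_right (/ D)) by (apply Rle_ge, Rlt_le, Rinv_0_lt_compat; lra).
  assert (/ 25 <= / D) by (apply Rinv_le_contravar; lra).
  assert (0 < / 25) by lra. pose proof (Rabs_pos (s - s')).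
  assert (/ 2025 = / 81 * / 25) by field.
  assert (/ 81 * / 25 <= Rabs (s - s') * / D) by (apply Rmult_le_compat; lra).
  assert (0 <= Rabs (s - s') * / D) by lra. nra.
Qed.

Definition Aseq (i : nat) : nat := start (S i).
Definition pt (kk : nat) (l : list bool) : R := g (/ 2 ^ kk * (1 + val l)).

Lemma sep_big kk l l' : (1 <= kk)%nat -> In l (allbits (4 * 2 ^ kk)) -> In l' (allbits (4 * 2 ^ kk)) -> l <> l' ->
  exists j, (j < 2 ^ S kk)%nat /\
    / 2025 <= Rabs (iterN FF (Aseq j) (pt kk l) - iterN FF (Aseq j) (pt kk l')).
Proof.
  intros Hk Hl Hl' Hne. apply allbits_len in Hl, Hl'.
  destruct (words_sep _ l l' Hl Hl' Hne) as [r [Hr Hb]].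
  pose proof (two_pow_ge2 kk Hk).
  exists (2 ^ kk - 2 + r)%nat. split. rewrite Nat.pow_succ_r; lia.
  unfold Aseq, pt. rewrite !observe by (auto; lia).
  pose proof (Kfac kk Hk r ltac:(lia)).
  rewrite !(Rmult_assoc (INR _)). rewrite <- !(Rmult_assoc (INR _)).
  apply g_sep; auto; apply val_range.
Qed.

Lemma pt_in kk l : inI (pt kk l).
Proof.
  unfold pt. pose proof (val_range l). assert (0 < / 2 ^ kk) by (apply Rinv_0_lt_compat, pow_lt; lra).
  pose proof (g_range (/ 2 ^ kk * (1 + val l)) ltac:(nra)). unfold inI; lra.
Qed.

Lemma Aseq_incr : strict_incr_pos Aseq.
Proof.
  split. unfold Aseq. simpl. unfold len. lia.
  intro j. unfold Aseq. change (start (S (S j))) with (start (S j) + len (S j))%nat. unfold len. lia.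
Qed.

Lemma entropy : seq_entropy_ge FF Aseq (ln 3).
Proof.
  intros c' Hc'. exists (/ 2025). split. lra.
  intros eps [He0 He1] N.
  set (kk := S N). assert (Hk : (1 <= kk)%nat) by (unfold kk; lia).
  exists (2 ^ S kk)%nat.
  assert (HN : (N < 2 ^ S kk)%nat).
  { pose proof (Nat.pow_gt_lin_r 2 N ltac:(lia)). pose proof (Nat.pow_le_mono_r 2 N (S kk) ltac:(lia) ltac:(unfold kk; lia)). lia. }
  split. lia. split. lia.
  exists (2 ^ (4 * 2 ^ kk))%nat. split.
  - exists (map (pt kk) (allbits (4 * 2 ^ kk))). split; [|rewrite length_map, allbits_length; auto].
    split; [|split].
    + apply NoDup_map_on. apply allbits_nodup.
      intros x y Hx Hy E. destruct (list_eq_dec Bool.bool_dec x y) as [|Ne]; auto. exfalso.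
      destruct (sep_big kk x y Hk Hx Hy Ne) as [j [_ Hj]]. rewrite E in Hj.
      replace (iterN FF (Aseq j) (pt kk y) - iterN FF (Aseq j) (pt kk y)) with 0 in Hj by ring.
      rewrite Rabs_R0 in Hj. lra.
    + intros x Hx. apply in_map_iff in Hx. destruct Hx as [l [<- _]]. apply pt_in.
    + intros x y Hx Hy Ne. apply in_map_iff in Hx, Hy.
      destruct Hx as [l [<- Hl]]. destruct Hy as [l' [<- Hl']].
      assert (l <> l') by (intro; subst; auto).
      destruct (sep_big kk l l' Hk Hl Hl' H) as [j [Hj Hs]]. exists j. split; auto. lra.
  - assert (I2 : INR 2 = 2) by (simpl; ring).
    assert (E1 : INR (2 ^ (4 * 2 ^ kk)) = 2 ^ (4 * 2 ^ kk)).
    { rewrite pow_INR, I2. reflexivity. }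
    assert (E2 : INR (2 ^ S kk) = 2 * 2 ^ kk).
    { rewrite pow_INR, I2. reflexivity. }
    assert (E3 : INR (4 * 2 ^ kk) = 4 * 2 ^ kk).
    { rewrite mult_INR, pow_INR, I2. f_equal. simpl; ring. }
    rewrite E1, E2. rewrite ln_pow by lra. rewrite E3.
    assert (0 < 2 ^ kk) by (apply pow_lt; lra).
    replace (4 * 2 ^ kk * ln 2 / (2 * 2 ^ kk)) with (ln 2 + ln 2) by (field; lra).
    rewrite <- ln_mult by lra.
    assert (ln 3 < ln (2 * 2)) by (apply ln_increasing; lra). lra.
Qed.

Theorem mainTheorem1 :
  exists F : nat -> R -> R,
    (forall k, maps_I (F k) /\ cont_I (F k) /\ surj_I (F k)) /\
    (exists f : R -> R, maps_I f /\ cont_I f /\ unif_conv_I F f) /\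
    (exists S : nat -> nat, strict_incr_pos S /\ seq_entropy_ge F S (ln 3)) /\
    ~ LY_chaotic F.
Proof.
  exists FF. split; [exact FF_props|]. split.
  - exists (fun x => x). split. intros x Hx; auto. split. apply lipE_cont, lipE_id. exact unif.
  - split. exists Aseq. split. exact Aseq_incr. exact entropy. exact not_chaotic.
Qed.
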